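(* In the setting below, fix an assignment matrix $A$ for which event $\mathcal A$ holds. Then $$\mu^*(P^* )\ \ge\ \frac{\gamma}{3e^{2\kappa}} .$$
   Context: Setting. Let $n\ge1$ (number of users) and $m\ge2$ (number of items). Fix user parameters $\theta^*_1,\dots,\theta^*_n\in\mathbb R$ and item parameters $\beta^*_1,\dots,\beta^*_m\in\mathbb R$. Write $w^*_i=e^{\beta^*_i}$, $\kappa=\max_i\beta^*_i-\min_i\beta^*_i$, and $\pi^*_i=w^*_i/\sum_{k=1}^m w^*_k$. The responses $X_{li}\in\{0,1\}$ are independent with $\Pr(X_{li}=1)=e^{\theta^*_l}/(e^{\theta^*_l}+e^{\beta^*_i})$. Let $\gamma=\min_{l\in[n],\,i\ne j\in[m]}\mathbb E[X_{li}(1-X_{lj})]$. For an assignment matrix $A\in\{0,1\}^{n\times m}$ and $p\in(0,1]$, let $B=A^\top A$, $d=\frac32mnp^2$, and define $P^*_{ij}=\frac1d\sum_{l=1}^nA_{li}A_{lj}\mathbb E[X_{li}(1-X_{lj})]$ for $i\ne j$, $P^*_{ii}=1-\sum_{k\ne i}P^*_{ik}$; $P^*$ is reversible with respect to $\pi^*$. Event $\mathcal A$: $\frac12np^2\le B_{ij}\le\frac32np^2$ for all $i\ne j$. For a stochastic matrix $M$ reversible with respect to a positive probability vector (so its eigenvalues are real, $1=\lambda_1\ge\lambda_2\ge\dots\ge\lambda_m$), the spectral gap is $\mu^*(M)=1-\max\{|\lambda_2|,|\lambda_m|\}$. *)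

(* Defs.v *)
From HB Require Import structures.
From mathcomp Require Import all_boot all_order all_algebra.
From mathcomp Require Import all_classical all_reals all_analysis.
Set Implicit Arguments. Unset Strict Implicit. Unset Printing Implicit Defensive.
Import Order.TTheory GRing.Theory Num.Theory.
Local Open Scope ring_scope.

Section Model.
Variables (R : realType) (n m : nat).
Variables (theta : 'I_n -> R) (beta : 'I_m -> R).

Definition resp_prob (l : 'I_n) (i : 'I_m) : R :=
  expR (theta l) / (expR (theta l) + expR (beta i)).

(* E[X_li (1 - X_lj)] for i <> j; by independence of X_li and X_lj
   this equals Pr(X_li=1) * (1 - Pr(X_lj=1)). *)
Definition cross_exp (l : 'I_n) (i j : 'I_m) : R :=
  resp_prob l i * (1 - resp_prob l j).

(* kappa = max_i beta_i - min_i beta_i = max over pairs (i,j) of beta_i - beta_j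
   (the pair i = j gives 0, so the default value 0 of the big max is harmless). *)
Definition kappa : R :=
  \big[Num.max/0]_(i < m) \big[Num.max/0]_(j < m) (beta i - beta j).

(* gamma = min over l, i <> j of E[X_li (1 - X_lj)]; the default 1 is
   harmless since every such value is < 1 and the index set is nonempty
   when n >= 1 and m >= 2. *)
Definition gamma : R :=
  \big[Num.min/1]_(l < n) \big[Num.min/1]_(i < m)
     \big[Num.min/1]_(j < m | i != j) cross_exp l i j.

Variables (A : 'I_n -> 'I_m -> bool) (p : R).

Definition Bmat : 'M[R]_m :=
  \matrix_(i, j) \sum_(l < n) ((A l i)%:R * (A l j)%:R).

Definition dnorm : R := 3 / 2 * m%:R * n%:R * p ^+ 2.

Definition Poff (i j : 'I_m) : R :=
  dnorm^-1 * \sum_(l < n) ((A l i)%:R * (A l j)%:R * cross_exp l i j).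

Definition Pstar : 'M[R]_m :=
  \matrix_(i, j) if i == j then 1 - \sum_(k < m | k != i) Poff i k
                 else Poff i j.

Definition eventA : Prop :=
  forall i j : 'I_m, i != j ->
    1 / 2 * n%:R * p ^+ 2 <= Bmat i j <= 3 / 2 * n%:R * p ^+ 2.

End Model.

(* s is the list of eigenvalues of M (roots of the characteristic polynomial,
   counted with multiplicity), all real, sorted nonincreasingly:
   s = [lambda_1; ...; lambda_m]. *)
Definition eigen_seq (R : realType) (k : nat) (M : 'M[R]_k) (s : seq R) : Prop :=
  [/\ size s = k, sorted (fun x y : R => y <= x) s &
      char_poly M = \prod_(x <- s) ('X - x%:P)].

(* spectral gap 1 - max(|lambda_2|, |lambda_m|) from the sorted eigenvalue list *)
Definition spectral_gap_of (R : realType) (k : nat) (s : seq R) : R :=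
  1 - Num.max `|s`_1| `|s`_(k.-1)|.

(* Main.v *)
Require Import Defs.
From HB Require Import structures.
From mathcomp Require Import all_boot all_order all_algebra.
From mathcomp Require Import all_classical all_reals all_analysis.
From mathcomp Require Import complex.
From mathcomp Require Import ring lra.
Import Order.TTheory GRing.Theory Num.Theory.
Local Open Scope ring_scope.
Lemma char_poly_conj (F : fieldType) (k : nat) (U D : 'M[F]_k) :
  U \in unitmx -> char_poly (invmx U *m D *m U) = char_poly D.
Proof.
move=> Uu; rewrite /char_poly /char_poly_mx.
have VU : map_mx (@polyC F) (invmx U) *m map_mx polyC U = 1%:M.
  by rewrite -map_mxM mulVmx // map_mx1.
have -> : 'X%:M - map_mx polyC (invmx U *m D *m U) =
  map_mx polyC (invmx U) *m ('X%:M - map_mx polyC D) *m map_mx polyC U.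
  by rewrite mulmxBr mulmxBl !map_mxM mul_mx_scalar -scalemxAl VU scalemx1.
by rewrite !det_mulmx mulrAC -det_mulmx VU det1 mul1r.
Qed.
Section Spec.
Variable R : realType.
Local Notation C := (R[i]).
Local Notation toC := (real_complex R).

Lemma spec_sym k (S : 'M[R]_k) : S^T = S ->
  exists (U : 'M[C]_k) (d : 'I_k -> R),
   [/\ U \is unitarymx,
       forall j, row j U *m map_mx toC S = (toC (d j)) *: row j U &
       char_poly S = \prod_(j < k) ('X - (d j)%:P)].
Proof.
move=> Ssym.
set A := map_mx toC S.
have Aherm : A \is hermsymmx.
  apply: realsym_hermsym.
    by apply/is_hermitianmxP; rewrite expr0 scale1r map_mx_id // /A map_trmx Ssym.
  by apply/mxOverP => i j; rewrite mxE; apply/complex_realP; exists (S i j).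
have /orthomx_spectralP AE := hermitian_normalmx Aherm.
set U := spectralmx A in AE. set sp := spectral_diag A in AE.
have Uu : U \is unitarymx := spectral_unitarymx A.
have spR := hermitian_spectral_diag_real Aherm.
have spE : forall j, sp 0 j = toC (complex.Re (sp 0 j)).
  by move=> j; rewrite RRe_real // (mxOverP spR).
exists U, (fun j => complex.Re (sp 0 j)); split => //.
- move=> j; have UA : U *m A = diag_mx sp *m U.
    by rewrite {1}AE !mulmxA mulmxV ?mul1mx // unitarymx_unit.
  by rewrite -row_mul UA row_mul row_diag_mx -scalemxAl -rowE -spE.
- apply: (@map_poly_inj _ _ toC); rewrite map_char_poly -/A.
  rewrite {1}AE char_poly_conj ?unitarymx_unit // char_poly_trig ?diag_mx_is_trig //.
  rewrite rmorph_prod; apply: eq_bigr => j _.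
  by rewrite mxE eqxx mulr1n rmorphB /= map_polyX map_polyC /= -spE.
Qed.

Local Notation ReC := (@complex.Re R).
Local Notation ImC := (@complex.Im R).
Definition qform {k} (M : 'M[R]_k) (x : 'rV[R]_k) := (x *m M *m x^T) 0 0.
Local Notation qf := qform.

Lemma tr11 (T : Type) (N : 'M[T]_1) : N^T = N.
Proof. by apply/matrixP => i j; rewrite mxE !ord1. Qed.

Lemma cqf k (M : 'M[R]_k) (v : 'rV[C]_k) : M^T = M ->
  (v *m map_mx toC M *m (map_mx Num.conj v)^T) 0 0 =
  toC (qf M (map_mx ReC v) + qf M (map_mx ImC v)).
Proof.
move=> Msym; set a := map_mx ReC v; set b := map_mx ImC v.
set X := map_mx toC a; set Y := map_mx toC b.
have vE : v = X + 'i *: Y.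
  apply/matrixP => i j; rewrite !mxE {1}[v i j]complexE complexiE //.
have vcE : map_mx Num.conj v = X + (- 'i) *: Y.
  rewrite vE map_mxD map_mxZ /= conjCi.
  have cX : forall z : 'rV[R]_k, map_mx Num.conj (map_mx toC z) = map_mx toC z.
    by move=> z; apply/matrixP => i j; rewrite !mxE; exact: conjc_real.
  by rewrite !cX.
rewrite vcE {1}vE !linearD /= !linearZ /= !mulmxDl -!scalemxAl.
have sw : (Y *m map_mx toC M *m X^T) = (X *m map_mx toC M *m Y^T).
  rewrite -[RHS]tr11 !trmx_mul trmxK.
  by rewrite [(map_mx _ M)^T]map_trmx Msym mulmxA.
rewrite sw.
have eX : X *m map_mx toC M *m X^T = map_mx toC (a *m M *m a^T).
  by rewrite !map_mxM map_trmx.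
have eY : Y *m map_mx toC M *m Y^T = map_mx toC (b *m M *m b^T).
  by rewrite !map_mxM map_trmx.
rewrite eX eY; set c := X *m _ *m Y^T.
set P := map_mx toC (a *m M *m a^T); set Q := map_mx toC (b *m M *m b^T).
rewrite !mxE.
have ii : 'i * 'i = -1 :> C by rewrite -expr2 sqrCi.
rewrite mulrDr mulrA !mulNr ii mulN1r opprK /qform !mxE rmorphD /=.
by rewrite addrA addrK.
Qed.

Definition cB {k} (x y : 'rV[C]_k) := (x *m (map_mx Num.conj y)^T) 0 0.

Lemma cBDl k (x1 x2 y : 'rV[C]_k) : cB (x1 + x2) y = cB x1 y + cB x2 y.
Proof. by rewrite /cB mulmxDl mxE. Qed.
Lemma cBDr k (x y1 y2 : 'rV[C]_k) : cB x (y1 + y2) = cB x y1 + cB x y2.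
Proof. by rewrite /cB map_mxD linearD /= mulmxDr mxE. Qed.
Lemma cBZl k c (x y : 'rV[C]_k) : cB (c *: x) y = c * cB x y.
Proof. by rewrite /cB -scalemxAl mxE. Qed.
Lemma cBZr k c (x y : 'rV[C]_k) : cB x (c *: y) = Num.conj c * cB x y.
Proof. by rewrite /cB map_mxZ linearZ /= -scalemxAr mxE. Qed.

Lemma vdecomp k (v : 'rV[C]_k) :
  v = map_mx toC (map_mx ReC v) + 'i *: map_mx toC (map_mx ImC v).
Proof. by apply/matrixP => i j; rewrite !mxE {1}[v i j]complexE complexiE. Qed.

Lemma cplx0 (x y : R) : toC x + 'i * toC y = 0 -> x = 0 /\ y = 0.
Proof.
rewrite -complexiE => /(congr1 (fun z => (complex.Re z, complex.Im z))) /= [].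
by move=> h1 h2; split; lra.
Qed.

Lemma cBreal k (a w : 'rV[R]_k) :
  cB (map_mx toC a) (map_mx toC w) = toC ((a *m w^T) 0 0).
Proof.
rewrite /cB.
have -> : map_mx Num.conj (map_mx toC w) = map_mx toC w.
  by apply/matrixP => i j; rewrite !mxE; exact: conjc_real.
by rewrite map_trmx -map_mxM mxE.
Qed.

Lemma eig_bounds k (S : 'M[R]_k) (u : 'rV[R]_k) (g : R) :
  S^T = S ->
  (forall x, g * qf 1%:M x <= qf (1%:M + S) x) ->
  (forall x, (x *m u^T) 0 0 = 0 -> g * qf 1%:M x <= qf (1%:M - S) x) ->
  forall (U : 'M[C]_k) (d : 'I_k -> R), U \is unitarymx ->
  (forall j, row j U *m map_mx toC S = toC (d j) *: row j U) ->
  (forall j, -1 + g <= d j) /\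
  (forall j1 j2, 1 - g < d j1 -> 1 - g < d j2 -> j1 = j2).
Proof.
move=> Ssym H1 H2 U d Uu Ueig.
have orth : forall i j, cB (row i U) (row j U) = (i == j)%:R.
  move=> i j; have /unitarymxP UU := Uu.
  move/matrixP: UU => /(_ i j); rewrite !mxE => <-.
  by rewrite /cB !mxE; apply: eq_bigr => l _; rewrite !mxE.
have cqb : forall (M : 'M[R]_k), M^T = M -> forall v : 'rV[C]_k,
   cB (v *m map_mx toC M) v = toC (qf M (map_mx ReC v) + qf M (map_mx ImC v)).
  by move=> M Msym v; rewrite /cB cqf.
have sym1 : (1%:M : 'M[R]_k)^T = 1%:M by rewrite trmx1.
have symP : (1%:M + S)^T = 1%:M + S by rewrite linearD /= trmx1 Ssym.
have symM : (1%:M - S)^T = 1%:M - S by rewrite linearB /= trmx1 Ssym.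
have eigP : forall j, row j U *m map_mx toC (1%:M + S) = toC (1 + d j) *: row j U.
  by move=> j; rewrite map_mxD map_mx1 mulmxDr mulmx1 Ueig rmorphD scalerDl rmorph1 scale1r.
have eigM : forall j, row j U *m map_mx toC (1%:M - S) = toC (1 - d j) *: row j U.
  by move=> j; rewrite map_mxB map_mx1 mulmxBr mulmx1 Ueig rmorphB scalerBl rmorph1 scale1r.
split.
  move=> j.
  have e1 := cqb _ symP (row j U); rewrite eigP cBZl orth eqxx mulr1 in e1.
  have e2 := cqb _ sym1 (row j U); rewrite map_mx1 mulmx1 orth eqxx in e2.
  have {e1} e1 := complexI e1.
  have {e2} e2 : 1 = _ := complexI e2.
  have h1 := H1 (map_mx ReC (row j U)); have h2 := H1 (map_mx ImC (row j U)).
  have : g = g * qf 1%:M (map_mx ReC (row j U)) + g * qf 1%:M (map_mx ImC (row j U)).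
    by rewrite -mulrDr -e2 mulr1.
  lra.
move=> j1 j2 hd1 hd2; apply/eqP/negPn/negP => nj.
set r1 := row j1 U; set r2 := row j2 U; set u' := map_mx toC u.
set c1 := cB r1 u'; set c2 := cB r2 u'.
have [al [be [nz perp]]] : exists al be : C,
    ((al != 0) || (be != 0)) /\ al * c1 + be * c2 = 0.
  have [c10|c1n0] := eqVneq c1 0.
    by exists 1, 0; rewrite oner_eq0 /= c10 mul0r mulr0 addr0.
  exists c2, (- c1); rewrite oppr_eq0 c1n0 orbT; split => //.
  by rewrite mulrC mulNr addrN.
set v := al *: r1 + be *: r2.
have vperp : cB v u' = 0 by rewrite /v cBDl !cBZl.
have [pa pb] : (map_mx ReC v *m u^T) 0 0 = 0 /\ (map_mx ImC v *m u^T) 0 0 = 0.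
  apply: cplx0; rewrite -!cBreal -cBZl -cBDl -vdecomp //.
have ha := H2 _ pa; have hb := H2 _ pb.
have o12 : (j1 == j2) = false by apply/negbTE.
have o21 : (j2 == j1) = false by rewrite eq_sym o12.
have eM := cqb _ symM v.
rewrite /v mulmxDl -!scalemxAl !eigM !cBDl !cBZl !cBDr !cBZr !orth eqxx o12 o21 in eM.
have e1 := cqb _ sym1 v.
rewrite map_mx1 mulmx1 /v !cBDl !cBZl !cBDr !cBZr !orth eqxx o12 o21 in e1.
rewrite -/v eqxx /= !mulr1 !mulr0 addr0 add0r in eM e1.
set A2 := al * al^*%C in e1 eM *; set B2 := be * be^*%C in e1 eM *.
have key : toC g * (A2 + B2) <= A2 * toC (1 - d j1) + B2 * toC (1 - d j2).
  have -> : A2 * toC (1 - d j1) + B2 * toC (1 - d j2) =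
    al * (toC (1 - d j1) * al^*%C) + be * (toC (1 - d j2) * be^*%C).
    by rewrite /A2 /B2; ring.
  rewrite eM e1 -rmorphM lecR mulrDr; exact: lerD.
have lt1 : toC (1 - d j1) < toC g by rewrite ltcR; lra.
have lt2 : toC (1 - d j2) < toC g by rewrite ltcR; lra.
have pos : 0 < A2 * (toC g - toC (1 - d j1)) + B2 * (toC g - toC (1 - d j2)).
  case/orP: nz => nz.
    apply: ltr_wpDr.
      by apply: mulr_ge0; [exact: mul_conjC_ge0 | rewrite subr_ge0 ltW].
    by apply: mulr_gt0; rewrite ?mul_conjC_gt0 ?subr_gt0.
  apply: ltr_wpDl.
    by apply: mulr_ge0; [exact: mul_conjC_ge0 | rewrite subr_ge0 ltW].
  by apply: mulr_gt0; rewrite ?mul_conjC_gt0 ?subr_gt0.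
have eq : A2 * (toC g - toC (1 - d j1)) + B2 * (toC g - toC (1 - d j2)) =
  toC g * (A2 + B2) - (A2 * toC (1 - d j1) + B2 * toC (1 - d j2)) by ring.
by move: pos; rewrite eq subr_gt0 => /lt_geF; rewrite key.
Qed.

End Spec.

Section Spec2.
Variable R : realType.
Local Notation C := (R[i]).
Local Notation toC := (real_complex R).
Local Notation qf := (@qform R _).
Lemma count_le1 (T : eqType) (P : pred T) (l : seq T) : uniq l ->
  {in l &, forall x y, P x -> P y -> x = y} -> (count P l <= 1)%N.
Proof.
elim: l => [//|x l IH] /= /andP[xl ul] H.
case Px: (P x) => /=.
  suff -> : count P l = 0%N by [].
  apply/eqP; rewrite -leqn0 leqNgt -has_count.
  apply/hasPn => y yl; apply/negP => Py.
  have xy : x = y by apply: H; rewrite ?inE ?eqxx ?yl ?orbT.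
  by move: xl; rewrite xy yl.
by rewrite add0n; apply: IH => // a b al bl; apply: H; rewrite inE ?al ?bl orbT.
Qed.

Definition geR (x y : R) := y <= x.

Lemma gap_from_forms k (S : 'M[R]_k) (u : 'rV[R]_k) (g : R) : (1 < k)%N ->
  S^T = S ->
  (forall x, g * qf 1%:M x <= qf (1%:M + S) x) ->
  (forall x, (x *m u^T) 0 0 = 0 -> g * qf 1%:M x <= qf (1%:M - S) x) ->
  (exists s, [/\ size s = k, sorted geR s & char_poly S = \prod_(x <- s) ('X - x%:P)])
  /\ (forall s, size s = k -> sorted geR s -> char_poly S = \prod_(x <- s) ('X - x%:P) ->
       g <= 1 - Num.max `|s`_1| `|s`_(k.-1)|).
Proof.
move=> k2 Ssym H1 H2.
have [U [d [Uu Ueig cpS]]] := spec_sym _ _ _ Ssym.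
have [lb ub] := eig_bounds _ _ _ _ _ Ssym H1 H2 _ _ Uu Ueig.
set L := [seq d j | j <- enum 'I_k].
have cpL : char_poly S = \prod_(x <- L) ('X - x%:P).
  by rewrite cpS big_map big_enum.
split.
  exists (sort geR L); split.
  - by rewrite size_sort size_map size_enum_ord.
  - by apply: sort_sorted => x y; rewrite /geR le_total.
  - by rewrite cpL (perm_big _ (permEl (perm_sort geR L))).
move=> s ss sorts cps.
have pL : perm_eq s L by apply: prod_XsubC_eq; rewrite -cps cpL.
have lbs : forall x, x \in s -> -1 + g <= x.
  move=> x; rewrite (perm_mem pL) => /mapP [j _ ->]; exact: lb.
have cnt : (count (fun x : R => (1 - g < x)%R) s <= 1)%N.
  rewrite (permP pL) count_map; apply: count_le1; first exact: enum_uniq.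
  by move=> a b _ _; apply: ub.
have m1 : s`_1 \in s by apply: mem_nth; rewrite ss.
have mk : s`_(k.-1) \in s by apply: mem_nth; rewrite ss; case: (k) k2.
have s1ub : s`_1 <= 1 - g.
  clear m1 mk lbs cps pL; move: ss sorts cnt; case: s => [|x0 [|x1 r]] /=; try by move=> ss; move: k2; rewrite -ss.
  move=> _ /andP[h01 _] cnt0; rewrite leNgt; apply/negP => h.
  have h0 : 1 - g < x0 by apply: lt_le_trans h h01.
  by move: cnt0; rewrite h h0.
have skl : s`_(k.-1) <= s`_1.
  have := @sorted_leq_nth _ geR _ _ 0 s sorts 1%N (k.-1).
  apply.
  - by move=> y x z hxy hyz; apply: le_trans hyz hxy.
  - by move=> x; apply: lexx.
  - by rewrite inE ss.
  - by rewrite inE ss; case: (k) k2.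
  - by case: (k) k2 => [|[|k']].
have a := lbs _ m1; have b := lbs _ mk.
have hm : Num.max `|s`_1| `|s`_(k.-1)| <= 1 - g.
  have e : -(1-g) = -1 + g by rewrite opprB addrC.
  rewrite ge_max !ler_norml e a b s1ub (le_trans skl s1ub).
  done.
by rewrite lerBrDr -lerBrDl.
Qed.
End Spec2.

Section Model.
Variables (R : realType) (n m : nat) (theta : 'I_n -> R) (beta : 'I_m -> R).
Variables (A : 'I_n -> 'I_m -> bool) (p : R).
Hypotheses (n0 : (0 < n)%N) (m1 : (1 < m)%N) (p0 : 0 < p) (p1 : p <= 1).
Hypothesis hA : eventA A p.

Local Notation rp := (resp_prob theta beta).
Local Notation ce := (cross_exp theta beta).
Local Notation gam := (gamma theta beta).
Local Notation kap := (kappa beta).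

Lemma rp_bounds l i : 0 < rp l i < 1.
Proof.
rewrite /resp_prob; have e1 := expR_gt0 (theta l); have e2 := expR_gt0 (beta i).
apply/andP; split; first by apply: divr_gt0 => //; apply: addr_gt0.
by rewrite ltr_pdivrMr ?addr_gt0 // mul1r ltrDl.
Qed.

Lemma ce_gt0 l i j : 0 < ce l i j.
Proof.
rewrite /cross_exp; have /andP[a b] := rp_bounds l i; have /andP[c d] := rp_bounds l j.
by apply: mulr_gt0 => //; rewrite subr_gt0.
Qed.

Lemma ce_sum l i j : ce l i j + ce l j i <= 1.
Proof.
rewrite /cross_exp; have /andP[a b] := rp_bounds l i; have /andP[c d] := rp_bounds l j.
nra.
Qed.

Lemma bigmin_le (I : finType) (P : pred I) (F : I -> R) x0 i : P i ->
  \big[Num.min/x0]_(j | P j) F j <= F i.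
Proof. by move=> Pi; rewrite (bigD1 i) //= ge_min lexx. Qed.

Lemma gam_le l i j : i != j -> gam <= ce l i j.
Proof.
move=> ij; rewrite /gamma.
apply: le_trans (bigmin_le _ _ _ _ l isT) _.
apply: le_trans (bigmin_le _ _ _ _ i isT) _.
exact: bigmin_le.
Qed.

Lemma gam_gt0 : 0 < gam.
Proof.
rewrite /gamma; apply: (big_ind (fun x => 0 < x)) => //.
  by move=> x y hx hy; rewrite lt_min hx hy.
move=> l _; apply: (big_ind (fun x => 0 < x)) => //.
  by move=> x y hx hy; rewrite lt_min hx hy.
move=> i _; apply: (big_ind (fun x => 0 < x)) => //.
  by move=> x y hx hy; rewrite lt_min hx hy.
move=> j _; exact: ce_gt0.
Qed.

Lemma gam_ce l i j : i != j -> ce l i j <= 1 - gam.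
Proof. move=> ij; have := ce_sum l i j; have : gam <= ce l j i by apply: gam_le; rewrite eq_sym. lra. Qed.

Lemma bigmax_ge (I : finType) (F : I -> R) x0 i :
  F i <= \big[Num.max/x0]_(j : I) F j.
Proof. by rewrite (bigD1 i) //= le_max lexx. Qed.

Lemma kap_ge i j : beta i - beta j <= kap.
Proof.
rewrite /kappa; apply: le_trans (bigmax_ge _ _ _ i).
exact: bigmax_ge.
Qed.

Lemma kap_ge0 : 0 <= kap.
Proof. have := kap_ge (Ordinal (ltnW m1)) (Ordinal (ltnW m1)); by rewrite subrr. Qed.

Local Notation P := (Pstar theta beta A p).
Local Notation Po := (Poff theta beta A p).
Local Notation w i := (expR (beta i)).

Lemma m_gt0 : 0 < m%:R :> R. Proof. by rewrite ltr0n; case: (m) m1. Qed.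
Lemma n_gt0 : 0 < n%:R :> R. Proof. by rewrite ltr0n. Qed.
Lemma d_gt0 : 0 < dnorm n m p.
Proof.
rewrite /dnorm; apply: mulr_gt0; last exact: exprn_gt0.
have h32 : 0 < 3 / 2 :> R by lra.
have mp := m_gt0; have np := n_gt0.
by apply: mulr_gt0 => //; apply: mulr_gt0.
Qed.

Lemma AA_ge0 l i j : 0 <= (A l i)%:R * (A l j)%:R :> R.
Proof. by apply: mulr_ge0; rewrite ler0n. Qed.

Lemma Po_ge i j : i != j -> gam / (3 * m%:R) <= Po i j.
Proof.
move=> ij; have /andP[hB _] := hA i j ij.
have s1 : gam * Bmat R A i j <= \sum_(l < n) (A l i)%:R * (A l j)%:R * ce l i j.
  rewrite /Bmat mxE mulr_sumr; apply: ler_sum => l _; rewrite mulrC.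
  by apply: ler_wpM2l; [exact: AA_ge0 | exact: gam_le].
have dp := d_gt0; have gp := gam_gt0; have mp := m_gt0; have np := n_gt0.
have s2 : gam * (1 / 2 * n%:R * p ^+ 2) <= gam * Bmat R A i j.
  by apply: ler_wpM2l => //; exact: ltW.
rewrite /Poff.
have -> : gam / (3 * m%:R) = (dnorm n m p)^-1 * (gam * (1 / 2 * n%:R * p ^+ 2)).
  rewrite /dnorm; field; apply/and3P; split; rewrite ?mulf_neq0 ?expf_neq0 ?lt0r_neq0 //.
apply: ler_wpM2l; first by rewrite invr_ge0 ltW.
exact: le_trans s2 s1.
Qed.

Lemma gam_le_half : gam <= 1 / 2.
Proof.
have i0 : (0 < m)%N by case: (m) m1.
have i1 : (1 < m)%N by [].
have ne : Ordinal i0 != Ordinal i1 by [].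
have := gam_ce (Ordinal n0) _ _ ne; have := gam_le (Ordinal n0) _ _ ne.
lra.
Qed.

Lemma Po_le i j : i != j -> Po i j <= (1 - gam) / m%:R.
Proof.
move=> ij; have /andP[_ hB] := hA i j ij.
have s1 : \sum_(l < n) (A l i)%:R * (A l j)%:R * ce l i j <= (1 - gam) * Bmat R A i j.
  rewrite /Bmat mxE mulr_sumr; apply: ler_sum => l _; rewrite [X in _ <= X]mulrC.
  by apply: ler_wpM2l; [exact: AA_ge0 | exact: gam_ce].
have dp := d_gt0; have gp := gam_gt0; have mp := m_gt0; have np := n_gt0.
have gh := gam_le_half.
have s2 : (1 - gam) * Bmat R A i j <= (1 - gam) * (3 / 2 * n%:R * p ^+ 2).
  by apply: ler_wpM2l => //; lra.
rewrite /Poff.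
have -> : (1 - gam) / m%:R = (dnorm n m p)^-1 * ((1 - gam) * (3 / 2 * n%:R * p ^+ 2)).
  rewrite /dnorm; field; apply/and3P; split; rewrite ?mulf_neq0 ?expf_neq0 ?lt0r_neq0 //.
apply: ler_wpM2l; first by rewrite invr_ge0 ltW.
exact: le_trans s1 s2.
Qed.

Lemma P_off i j : i != j -> P i j = Po i j.
Proof. by move=> ij; rewrite /Pstar mxE (negbTE ij). Qed.

Lemma P_diagE i : P i i = 1 - \sum_(k < m | k != i) Po i k.
Proof. by rewrite /Pstar mxE eqxx. Qed.

Lemma P_row i : \sum_j P i j = 1.
Proof.
rewrite (bigD1 i) //= P_diagE.
rewrite (eq_bigr (fun k => Po i k)); last by move=> k ki; rewrite P_off // eq_sym.
by rewrite subrK.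
Qed.

Lemma P_diag i : gam <= P i i.
Proof.
rewrite P_diagE.
have gh := gam_le_half; have mp := m_gt0.
have c0 : 0 <= (1 - gam) / m%:R by apply: divr_ge0; lra.
have s1 : \sum_(k < m | k != i) Po i k <= \sum_(k < m | k != i) (1 - gam) / m%:R.
  by apply: ler_sum => k ki; apply: Po_le; rewrite eq_sym.
have s2 : \sum_(k < m) (1 - gam) / m%:R = 1 - gam.
  rewrite sumr_const card_ord.
  have -> : (1 - gam) / m%:R *+ m = (1 - gam) / m%:R * m%:R by rewrite mulr_natr.
  by rewrite divfK // lt0r_neq0.
have s3 : \sum_(k < m) (1 - gam) / m%:R =
    (1 - gam) / m%:R + \sum_(k < m | k != i) (1 - gam) / m%:R by rewrite (bigD1 i).
lra.
Qed.

Lemma ce_rev l i j : w i * ce l i j = w j * ce l j i.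
Proof.
rewrite /cross_exp /resp_prob.
have e1 := expR_gt0 (theta l); have e2 := expR_gt0 (beta i); have e3 := expR_gt0 (beta j).
field; apply/andP; split; apply: lt0r_neq0; exact: addr_gt0.
Qed.

Lemma P_rev i j : w i * P i j = w j * P j i.
Proof.
have [->|ij] := eqVneq i j; first by [].
rewrite P_off // P_off 1?eq_sym // /Poff mulrCA [w j * _]mulrCA; congr (_ * _).
rewrite !mulr_sumr; apply: eq_bigr => l _.
by rewrite mulrCA ce_rev [(A l j)%:R * _]mulrC mulrCA.
Qed.

Local Notation qf := (@qform R _).
Definition hv (i : 'I_m) := expR (beta i / 2).
Local Notation h := hv.
Lemma h_gt0 i : 0 < h i. Proof. exact: expR_gt0. Qed.
Lemma hh i : h i * h i = w i.
Proof. by rewrite /hv -expRD; congr expR; field. Qed.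

Definition Smat : 'M[R]_m := \matrix_(i, j) (h i * P i j / h j).

Lemma SE i j : Smat i j = h i * P i j / h j.
Proof. by rewrite /Smat mxE. Qed.

Lemma S_sym : Smat^T = Smat.
Proof.
apply/matrixP => i j; rewrite mxE !SE.
have hi := h_gt0 i; have hj := h_gt0 j.
have e1 : h j * P j i / h i = (h j * h j) * P j i / (h i * h j).
  by field; apply/andP; split; apply: lt0r_neq0.
have e2 : h i * P i j / h j = (h i * h i) * P i j / (h i * h j).
  by field; apply/andP; split; apply: lt0r_neq0.
by rewrite e1 e2 !hh P_rev.
Qed.

Lemma qfD k (M N : 'M[R]_k) x : qf (M + N) x = qf M x + qf N x.
Proof. by rewrite /qform mulmxDr mulmxDl mxE. Qed.
Lemma qfB k (M N : 'M[R]_k) x : qf (M - N) x = qf M x - qf N x.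
Proof. by rewrite /qform mulmxBr mulmxBl !mxE. Qed.
Lemma qfE k (M : 'M[R]_k) x : qf M x = \sum_i \sum_j x 0 i * M i j * x 0 j.
Proof.
rewrite /qform mxE exchange_big; apply: eq_bigr => j _.
by rewrite !mxE mulr_suml.
Qed.
Lemma qf1 k (x : 'rV[R]_k) : qf 1%:M x = \sum_i x 0 i ^+ 2.
Proof. by rewrite /qform mulmx1 mxE; apply: eq_bigr => i _; rewrite mxE expr2. Qed.

Lemma qf1_y (x : 'rV[R]_m) : qf 1%:M x = \sum_i w i * (x 0 i / h i) ^+ 2.
Proof.
rewrite qf1; apply: eq_bigr => i _; rewrite -hh.
have := h_gt0 i => hi; field; exact: lt0r_neq0.
Qed.

Lemma qfS_y (x : 'rV[R]_m) :
  qf Smat x = \sum_i \sum_j w i * P i j * ((x 0 i / h i) * (x 0 j / h j)).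
Proof.
rewrite qfE; apply: eq_bigr => i _; apply: eq_bigr => j _; rewrite SE -hh.
have := h_gt0 i => hi; have := h_gt0 j => hj.
field; apply/andP; split; exact: lt0r_neq0.
Qed.

Section Ident.
Variable y : 'I_m -> R.
Let N := \sum_i w i * y i ^+ 2.
Let T := \sum_i \sum_j w i * P i j * (y i * y j).

Lemma T1 : \sum_i \sum_j w i * P i j * y i ^+ 2 = N.
Proof.
apply: eq_bigr => i _.
rewrite (eq_bigr (fun j => (w i * y i ^+ 2) * P i j)); last by move=> j _; ring.
by rewrite -mulr_sumr P_row mulr1.
Qed.

Lemma T3 : \sum_i \sum_j w i * P i j * y j ^+ 2 = N.
Proof.
rewrite exchange_big -T1; apply: eq_bigr => j _; apply: eq_bigr => i _.
by rewrite P_rev.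
Qed.

Lemma Dm : \sum_i \sum_j w i * P i j * (y i - y j) ^+ 2 = 2 * (N - T).
Proof.
transitivity (\sum_i \sum_j w i * P i j * y i ^+ 2 + \sum_i \sum_j w i * P i j * y j ^+ 2
   - 2 * \sum_i \sum_j w i * P i j * (y i * y j)).
  rewrite mulr_sumr -big_split -sumrB /=; apply: eq_bigr => i _.
  rewrite mulr_sumr -big_split -sumrB /=; apply: eq_bigr => j _; ring.
rewrite T1 T3 /T; ring.
Qed.

Lemma Dp : \sum_i \sum_j w i * P i j * (y i + y j) ^+ 2 = 2 * (N + T).
Proof.
transitivity (\sum_i \sum_j w i * P i j * y i ^+ 2 + \sum_i \sum_j w i * P i j * y j ^+ 2
   + 2 * \sum_i \sum_j w i * P i j * (y i * y j)).
  rewrite mulr_sumr -!big_split /=; apply: eq_bigr => i _.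
  rewrite mulr_sumr -!big_split /=; apply: eq_bigr => j _; ring.
rewrite T1 T3 /T; ring.
Qed.
End Ident.

Local Notation K := (expR (2 * kap)).
Definition gg := gam / (3 * K).

Lemma K_ge1 : 1 <= K.
Proof. by rewrite -[X in X <= _]expR0 ler_expR; have := kap_ge0; lra. Qed.

Lemma gg_le : gg <= gam / 3.
Proof.
have := K_ge1 => k1; have := gam_gt0 => g0.
have k0 : 0 < K by lra.
have -> : gg = (gam / 3) / K by rewrite /gg; field; apply: lt0r_neq0.
rewrite ler_pdivrMr //; nra.
Qed.

Lemma gg_ge0 : 0 <= gg.
Proof. have := K_ge1 => k1; have := gam_gt0 => g0; rewrite /gg; apply: divr_ge0; lra. Qed.

Lemma P_ge0 i j : 0 <= P i j.
Proof.
have := gam_gt0 => g0; have := m_gt0 => mp.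
have [->|ij] := eqVneq i j; first by have := P_diag j; lra.
rewrite P_off //; apply: le_trans (Po_ge _ _ ij); apply: divr_ge0; lra.
Qed.

Lemma L1 (x : 'rV[R]_m) : gg * qf 1%:M x <= qf (1%:M + Smat) x.
Proof.
rewrite qfD qf1_y qfS_y.
have := Dp (fun i => x 0 i / h i) => /= eDp.
set N := \sum_i w i * (x 0 i / h i) ^+ 2 in eDp *.
have key : 4 * gam * N <= \sum_i \sum_j w i * P i j * (x 0 i / h i + x 0 j / h j) ^+ 2.
  rewrite /N mulr_sumr; apply: ler_sum => i _; rewrite (bigD1 i) //=.
  have rest : 0 <= \sum_(j < m | j != i) w i * P i j * (x 0 i / h i + x 0 j / h j) ^+ 2.
    apply: sumr_ge0 => j _; apply: mulr_ge0; last exact: sqr_ge0.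
    by apply: mulr_ge0; [exact: ltW (expR_gt0 _) | exact: P_ge0].
  have -> : w i * P i i * (x 0 i / h i + x 0 i / h i) ^+ 2 =
     4 * (w i * (x 0 i / h i) ^+ 2) * P i i by ring.
  have a1 : 0 <= 4 * (w i * (x 0 i / h i) ^+ 2).
    by apply: mulr_ge0; [lra | apply: mulr_ge0; [exact: ltW (expR_gt0 _) | exact: sqr_ge0]].
  have a2 := P_diag i.
  have : 4 * (w i * (x 0 i / h i) ^+ 2) * gam <= 4 * (w i * (x 0 i / h i) ^+ 2) * P i i.
    exact: ler_wpM2l.
  lra.
have N0 : 0 <= N.
  by apply: sumr_ge0 => i _; apply: mulr_ge0; [exact: ltW (expR_gt0 _) | exact: sqr_ge0].
have g1 : gg * N <= gam / 3 * N by apply: ler_wpM2r => //; exact: gg_le.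
have g0 := gam_gt0.
have gN : 0 <= gam * N by apply: mulr_ge0 => //; lra.
move: key; rewrite eDp; lra.
Qed.

Lemma L2y (y : 'I_m -> R) : \sum_i w i * y i = 0 ->
  gam * (\sum_i w i * y i ^+ 2) <=
  3 * K * (\sum_i w i * y i ^+ 2 - \sum_i \sum_j w i * P i j * (y i * y j)).
Proof.
move=> hy.
have eDm := Dm y.
set N := \sum_i w i * y i ^+ 2 in eDm *.
set T := \sum_i \sum_j w i * P i j * (y i * y j) in eDm *.
set W := \sum_i w i.
have W0 : 0 < W.
  rewrite /W (bigD1 (Ordinal (ltnW m1))) //=; apply: ltr_pwDl; first exact: expR_gt0.
  by apply: sumr_ge0 => j _; exact: ltW (expR_gt0 _).
have iden : \sum_k \sum_i w k * w i * (y k - y i) ^+ 2 = 2 * W * N.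
  transitivity (\sum_k \sum_i (w k * y k ^+ 2) * w i + \sum_k \sum_i w k * (w i * y i ^+ 2)
     - 2 * \sum_k \sum_i (w k * y k) * (w i * y i)).
    rewrite mulr_sumr -big_split -sumrB /=; apply: eq_bigr => k _.
    rewrite mulr_sumr -big_split -sumrB /=; apply: eq_bigr => i _; ring.
  rewrite -!big_distrlr /= hy /N /W; ring.
have K1 := K_ge1; have g0 := gam_gt0; have mp := m_gt0.
have pt : forall k i, gam * (w k * w i * (y k - y i) ^+ 2) <=
     3 * K * W * (w i * P i k * (y i - y k) ^+ 2).
  move=> k i; have [<-|ki] := eqVneq k i.
    by rewrite !subrr expr0n /= !mulr0.
  have a1 : gam <= P i k * (3 * m%:R).
    have := Po_ge i k (ltac:(by rewrite eq_sym)); rewrite -P_off ?(eq_sym i) //.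
    by rewrite ler_pdivrMr //; lra.
  have a2 : m%:R * w k <= K * W.
    have : \sum_(j < m) w k <= \sum_(j < m) K * w j.
      apply: ler_sum => j _; rewrite -expRD ler_expR.
      by have := kap_ge k j; have := kap_ge0; lra.
    have e : \sum_(j < m) w k = m%:R * w k by rewrite sumr_const card_ord mulr_natl.
    have e' : \sum_(j < m) K * w j = K * W by rewrite -mulr_sumr.
    by rewrite e e'.
  have a3 : gam * (m%:R * w k) <= (P i k * (3 * m%:R)) * (K * W).
    have w0 : 0 <= m%:R * w k by apply: mulr_ge0; [lra | exact: ltW (expR_gt0 _)].
    have g0' : 0 <= gam by lra.
    exact: ler_pM g0' w0 a1 a2.
  have a4 : gam * w k <= 3 * K * W * P i k.
    have e1 : gam * (m%:R * w k) = m%:R * (gam * w k) by ring.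
    have e2 : P i k * (3 * m%:R) * (K * W) = m%:R * (3 * K * W * P i k) by ring.
    by rewrite e1 e2 ler_pM2l in a3.
  have D0 : 0 <= w i * (y k - y i) ^+ 2.
    by apply: mulr_ge0; [exact: ltW (expR_gt0 _) | exact: sqr_ge0].
  have e3 : gam * (w k * w i * (y k - y i) ^+ 2) = (gam * w k) * (w i * (y k - y i) ^+ 2) by ring.
  have e4 : 3 * K * W * (w i * P i k * (y i - y k) ^+ 2) =
      (3 * K * W * P i k) * (w i * (y k - y i) ^+ 2).
    by rewrite -opprB sqrrN; ring.
  by rewrite e3 e4; apply: ler_wpM2r.
have sum1 : gam * (2 * W * N) <= 3 * K * W * (2 * (N - T)).
  rewrite -iden -eDm [in X in _ <= X]exchange_big mulr_sumr [X in _ <= X]mulr_sumr.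
  apply: ler_sum => k _; rewrite mulr_sumr [X in _ <= X]mulr_sumr.
  by apply: ler_sum => i _; exact: pt.
have e1 : gam * (2 * W * N) = (2 * W) * (gam * N) by ring.
have e2 : 3 * K * W * (2 * (N - T)) = (2 * W) * (3 * K * (N - T)) by ring.
by rewrite e1 e2 ler_pM2l in sum1; lra.
Qed.

Lemma L2 (x : 'rV[R]_m) : (x *m (\row_i h i)^T) 0 0 = 0 ->
  gg * qf 1%:M x <= qf (1%:M - Smat) x.
Proof.
move=> hx; rewrite qfB qf1_y qfS_y.
have := L2y (fun i => x 0 i / h i) => /= H.
have hs : \sum_i w i * (x 0 i / h i) = 0.
  transitivity ((x *m (\row_i h i)^T) 0 0); last exact: hx.
  rewrite [RHS]mxE; apply: eq_bigr => i _; rewrite !mxE -hh.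
  by have := h_gt0 i => hi; field; exact: lt0r_neq0.
have {}H := H hs.
have K1 := K_ge1.
rewrite /gg mulrAC ler_pdivrMr; last lra.
lra.
Qed.

Lemma P_conj : exists V : 'M[R]_m, V \in unitmx /\ P = invmx V *m Smat *m V.
Proof.
set V := diag_mx (\row_i h i); set V' := diag_mx (\row_i (h i)^-1).
have VV : V' *m V = 1%:M.
  apply/matrixP => i j; rewrite mul_diag_mx !mxE.
  have [->|ij] := eqVneq i j; first by rewrite ?eqxx /= ?mulr1n mulVf // lt0r_neq0 // h_gt0.
  by rewrite ?(negbTE ij) /= ?mulr0n mulr0.
have [_ Vu] := mulmx1_unit VV.
have iV : invmx V = V'.
  by rewrite -[invmx V]mul1mx -VV -mulmxA mulmxV // mulmx1.
exists V; split => //; rewrite iV.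
apply/matrixP => i j; rewrite mul_mx_diag mul_diag_mx !mxE.
have := h_gt0 i => hi; have := h_gt0 j => hj.
field; apply/andP; split; exact: lt0r_neq0.
Qed.

Lemma main_sec : (exists s, eigen_seq P s) /\
  (forall s, eigen_seq P s -> spectral_gap_of m s >= gam / (3 * expR (2 * kap))).
Proof.
have cpe : char_poly P = char_poly Smat.
  by have [V [Vu ->]] := P_conj; rewrite char_poly_conj.
have [G1 G2] := gap_from_forms R m Smat (\row_i h i) gg m1 S_sym L1 L2.
split.
  have [s [ss so cs]] := G1; exists s; split => //; by rewrite cpe.
move=> s [ss so cs]; rewrite /spectral_gap_of; apply: G2 => //; by rewrite -cpe.
Qed.
End Model.

Theorem mainTheorem9 (R : realType) (n m : nat)
  (theta : 'I_n -> R) (beta : 'I_m -> R)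
  (A : 'I_n -> 'I_m -> bool) (p : R) :
  (0 < n)%N -> (1 < m)%N ->
  0 < p -> p <= 1 ->
  eventA A p ->
  (exists s, eigen_seq (Pstar theta beta A p) s) /\
  (forall s, eigen_seq (Pstar theta beta A p) s ->
     spectral_gap_of m s >= gamma theta beta / (3 * expR (2 * kappa beta))).
Proof. by move=> n0 m1 p0 p1 hA; apply: main_sec. Qed.
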